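(* Let $T\in\mathcal{C}_{P,t}$ and let $I_T=\{S\in\mathbb{C}[z]: T(S(z)b)=0\text{ for all }b\in\mathcal{A}_P\}$. Then $I_T=\{S\in\mathbb{C}[z] : S(x)F_T(x)\in\mathbb{C}[x]\}$, where the product $S(x)F_T(x)$ is computed in the ring of formal Laurent series $\mathbb{C}((x^{-1}))$. In particular, $T$ is degenerate if and only if $F_T(x)$ is (the expansion at $x=\infty$ of) a rational function of $x$; and in that case, writing $F_T=R/S$ with $R,S\in\mathbb{C}[x]$, $S$ monic and $\gcd(R,S)=1$, the polynomial $S(z)$ generates the ideal $I_T$ of $\mathbb{C}[z]$.
   Context: $P\in\mathbb{C}[x]$ is a nonconstant monic polynomial, $t\in\mathbb{C}\setminus\{0\}$. $\mathcal{A}_P$ denotes the associative unital $\mathbb{C}$-algebra generated by $u,v,z$ subject to $zu-uz=u$, $zv-vz=-v$, $uv=P(z-\tfrac12)$, $vu=P(z+\tfrac12)$; the subalgebra generated by $z$ is a polynomial ring $\mathbb{C}[z]$. $g_t$ is the automorphism with $g_t(u)=t^{-1}u$, $g_t(v)=tv$, $g_t(z)=z$. A twisted trace is a linear $T:\mathcal{A}_P\to\mathbb{C}$ with $T(ab)=T(g_t(b)a)$ for all $a,b$; $\mathcal{C}_{P,t}$ is the space of these. $T$ is degenerate if there is $0\neq a\in\mathcal{A}_P$ with $T(ab)=0$ for all $b$. The formal Stieltjes transform of $T$ is $F_T(x)=\sum_{n\ge0}T(z^n)x^{-n-1}\in x^{-1}\mathbb{C}[[x^{-1}]]$; rational functions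 vanishing at $\infty$ are identified with their expansions in $x^{-1}\mathbb{C}[[x^{-1}]]$. *)

(* Defs.v *)
From HB Require Import structures.
From mathcomp Require Import all_boot all_order all_algebra.
From mathcomp Require Import complex reals.
Set Implicit Arguments. Unset Strict Implicit. Unset Printing Implicit Defensive.
Import Order.TTheory GRing.Theory Num.Theory.
Local Open Scope ring_scope.

Definition AP_rels (C : fieldType) (P : {poly C}) (B : algType C) (u v z : B) : Prop :=
  [/\ z * u - u * z = u,
      z * v - v * z = - v,
      u * v = horner_alg (z - (2%:R^-1 : C)%:A) P
    & v * u = horner_alg (z + (2%:R^-1 : C)%:A) P].

Definition alg_morph (C : fieldType) (A B : algType C) (f : A -> B) : Prop :=
  [/\ forall (c : C) (a b : A), f (c *: a + b) = c *: f a + f b,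
      forall a b : A, f (a * b) = f a * f b
    & f 1 = 1].

(* (A, u, v, z) is the associative unital C-algebra generated by u, v, z
   subject to the relations AP_rels P (universal property of a presentation). *)
Definition is_AP (C : fieldType) (P : {poly C}) (A : algType C) (u v z : A) : Prop :=
  AP_rels P u v z /\
  forall (B : algType C) (u' v' z' : B), AP_rels P u' v' z' ->
    (exists f : A -> B, [/\ alg_morph f, f u = u', f v = v' & f z = z']) /\
    (forall f g : A -> B, alg_morph f -> alg_morph g ->
        f u = g u -> f v = g v -> f z = g z -> f = g).

Definition twisted_trace (C : fieldType) (A : algType C) (g : A -> A) (T : A -> C) : Prop :=
  (forall (c : C) (a b : A), T (c *: a + b) = c * T a + T b) /\
  (forall a b : A, T (a * b) = T (g b * a)).

Definition degenerate (C : fieldType) (A : algType C) (T : A -> C) : Prop :=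
  exists a : A, a != 0 /\ forall b : A, T (a * b) = 0.

Definition in_IT (C : fieldType) (A : algType C) (z : A) (T : A -> C) (S : {poly C}) : Prop :=
  forall b : A, T (horner_alg z S * b) = 0.

(* Formal Laurent series in x^{-1} are represented by their coefficient
   function k |-> (coefficient of x^k), k : int (support bounded above). *)

(* F_T(x) = sum_{n>=0} T(z^n) x^{-n-1}; note Negz n = -(n+1). *)
Definition stieltjes (C : fieldType) (A : algType C) (z : A) (T : A -> C) : int -> C :=
  fun k => match k with Negz n => T (z ^+ n) | Posz _ => 0 end.

Definition lmul_poly (C : fieldType) (S : {poly C}) (f : int -> C) : int -> C :=
  fun k => \sum_(i < size S) S`_i * f (k - (i : nat)%:Z).

Definition laurent_of_poly (C : fieldType) (p : {poly C}) : int -> C :=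
  fun k => match k with Posz n => p`_n | Negz _ => 0 end.

Definition laurent_is_poly (C : fieldType) (f : int -> C) : Prop :=
  forall n : nat, f (Negz n) = 0.

Definition is_rational_expansion (C : fieldType) (f : int -> C) : Prop :=
  exists Rp S : {poly C}, S != 0 /\ lmul_poly S f = laurent_of_poly Rp.

(* Main.v *)
Require Import Defs.
From HB Require Import structures.
From mathcomp Require Import all_boot all_order all_algebra.
From mathcomp Require Import complex reals.
From mathcomp Require Import zify ring.
From mathcomp Require Import boolp.
Import Order.TTheory GRing.Theory Num.Theory.
Local Open Scope ring_scope.

Module Aux.
Set Implicit Arguments. Unset Strict Implicit. Unset Printing Implicit Defensive.

Section Laurent.
Variable C : fieldType.
Implicit Types (p q : {poly C}) (f g : int -> C).

Lemma lmul_widen p f k N : (size p <= N)%N ->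
  lmul_poly p f k = \sum_(i < N) p`_i * f (k - (i : nat)%:Z).
Proof.
move=> hN; rewrite /lmul_poly (big_ord_widen _ (fun i : nat => p`_i * f (k - i%:Z)) hN) big_mkcond.
apply: eq_bigr => i _; case: ifP => // /negbT; rewrite -leqNgt => h.
by rewrite nth_default // mul0r.
Qed.

Lemma lmul0 f k : lmul_poly 0 f k = 0.
Proof. by rewrite /lmul_poly size_poly0 big_ord0. Qed.

Lemma lmulD p q f k : lmul_poly (p + q) f k = lmul_poly p f k + lmul_poly q f k.
Proof.
have h1 : (size p <= size p + size q)%N by apply: leq_addr.
have h2 : (size q <= size p + size q)%N by apply: leq_addl.
have h3 : (size (p + q)%R <= size p + size q)%N.
  by apply: (leq_trans (size_polyD _ _)); rewrite geq_max h1 h2.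
rewrite !(lmul_widen _ _ h1, lmul_widen _ _ h2, lmul_widen _ _ h3) -big_split.
by apply: eq_bigr => i _; rewrite coefD mulrDl.
Qed.

Lemma lmulZ c p f k : lmul_poly (c *: p) f k = c * lmul_poly p f k.
Proof.
rewrite (lmul_widen _ _ (size_scale_leq c p)) /lmul_poly mulr_sumr.
by apply: eq_bigr => i _; rewrite coefZ mulrA.
Qed.

Lemma lmulC c f k : lmul_poly c%:P f k = c * f k.
Proof.
rewrite (lmul_widen _ _ (size_polyC_leq1 c)) big_ord1 coefC /=.
by rewrite subr0.
Qed.

Lemma lmulMX p f k : lmul_poly (p * 'X) f k = lmul_poly p f (k - 1).
Proof.
have h : (size (p * 'X)%R <= (size p).+1)%N.
  by apply: (leq_trans (size_polyMleq _ _)); rewrite size_polyX addn2.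
rewrite (lmul_widen _ _ h) big_ord_recl coefMX /= mul0r add0r /lmul_poly.
apply: eq_bigr => i _; rewrite coefMX /=; congr (_ * f _).
rewrite /bump /=; lia.
Qed.

Lemma lmul_shift p g k : lmul_poly p (fun k => g (k - 1)) k = lmul_poly p g (k - 1).
Proof. by apply: eq_bigr => i _; congr (_ * g _); lia. Qed.

Lemma lmul_mul p q f k : lmul_poly (p * q) f k = lmul_poly p (lmul_poly q f) k.
Proof.
elim/poly_ind: p q k => [|p c IH] q k; first by rewrite mul0r !lmul0.
rewrite mulrDl -mulrA (mulrC 'X) lmulD IH mul_polyC lmulZ.
rewrite lmulD lmulC lmulMX -lmul_shift; congr (_ + _).
by congr (lmul_poly p _ k); apply: funext => j; rewrite lmulMX.
Qed.

Lemma lmul_lop p q : lmul_poly p (laurent_of_poly q) = laurent_of_poly (p * q).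
Proof.
apply: funext => k; elim/poly_ind: p q k => [|p c IH] q k.
  by rewrite lmul0 mul0r; case: k => n //=; rewrite coef0.
rewrite lmulD lmulMX IH lmulC mulrDl mul_polyC -mulrA (mulrC 'X) mulrA.
case: k => [[|n]|n].
- by rewrite /= coefD coefMX coefZ /=.
- rewrite (_ : n.+1%:Z - 1 = Posz n) /=; last by lia.
  by rewrite coefD coefMX coefZ.
- rewrite (_ : Negz n - 1 = Negz n.+1) /=; last by rewrite !NegzE; lia.
  by rewrite mulr0 addr0.
Qed.

Lemma lop_inj p q : laurent_of_poly p = laurent_of_poly q -> p = q.
Proof. by move=> h; apply/polyP => i; have := congr1 (fun f => f (Posz i)) h. Qed.

End Laurent.

Section AlgMorph.
Variables (C : fieldType) (A B : algType C) (f : A -> B).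
Hypothesis hf : alg_morph f.

Lemma amD a b : f (a + b) = f a + f b.
Proof. by case: hf => h _ _; have := h 1 a b; rewrite !scale1r. Qed.
Lemma am0 : f 0 = 0.
Proof. by apply: (@addrI _ (f 0)); rewrite -amD !addr0. Qed.
Lemma amZ c a : f (c *: a) = c *: f a.
Proof. by case: hf => h _ _; have := h c a 0; rewrite !addr0 am0 addr0. Qed.
Lemma amM a b : f (a * b) = f a * f b.
Proof. by case: hf. Qed.
Lemma am1 : f 1 = 1.
Proof. by case: hf. Qed.
Lemma am_horner a p : f (horner_alg a p) = horner_alg (f a) p.
Proof.
elim/poly_ind: p => [|p c IH]; first by rewrite !rmorph0 am0.
rewrite !rmorphD !rmorphM /= !horner_algX !horner_algC amD amM IH.
by rewrite amZ am1.
Qed.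
End AlgMorph.

Lemma am_comp (C : fieldType) (A B D : algType C) (f : A -> B) (g : B -> D) :
  alg_morph f -> alg_morph g -> alg_morph (g \o f).
Proof.
move=> hf hg; split => [c a b|a b|] /=.
- by rewrite (amD hf) (amZ hf) (amD hg) (amZ hg).
- by rewrite (amM hf) (amM hg).
- by rewrite (am1 hf) (am1 hg).
Qed.

Lemma am_id (C : fieldType) (A : algType C) : alg_morph (@id A).
Proof. by []. Qed.

Section Gen.
Variables (C : fieldType) (A : algType C) (L : A -> Prop).
Hypotheses (L1 : L 1) (LD : forall a b, L a -> L b -> L (a + b))
  (L0 : L 0) (LZ : forall c a, L a -> L (c *: a)) (LM : forall a b, L a -> L b -> L (a * b)).

Definition Lb : {pred A} := fun x => `[< L x >].

Lemma Lb_closed : GRing.subsemialg_closed Lb.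
Proof.
split.
- by apply/asboolP.
- split; first by apply/asboolP.
  by move=> a b /asboolP ha /asboolP hb; apply/asboolP; apply: LD.
- by move=> c a /asboolP ha; apply/asboolP; apply: LZ.
- by move=> a b /asboolP ha /asboolP hb; apply/asboolP; apply: LM.
Qed.

HB.instance Definition _ := GRing.isSubalgClosed.Build C A Lb Lb_closed.

Inductive Bsub := mkB x & x \in Lb.
Definition vB u := let: mkB x _ := u in x.
HB.instance Definition _ := [isSub for vB].
HB.instance Definition _ := [Choice of Bsub by <:].
HB.instance Definition _ := [SubChoice_isSubAlgebra of Bsub by <:].

Lemma vB_am : alg_morph vB.
Proof. by []. Qed.
Lemma vB_in (a : Bsub) : L (vB a).
Proof. by case: a => x hx; apply/asboolP. Qed.

Lemma AP_gen (P : {poly C}) (u v z : A) : is_AP P u v z ->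
  L u -> L v -> L z -> forall a, L a.
Proof.
move=> [[r1 r2 r3 r4] univ] Lu Lv Lz a.
have mk : forall x, L x -> x \in Lb by move=> x hx; apply/asboolP.
pose u' := mkB (mk _ Lu); pose v' := mkB (mk _ Lv); pose z' := mkB (mk _ Lz).
have vinj : injective vB by apply: val_inj.
have rel' : AP_rels P u' v' z'.
  split; apply: vinj; rewrite ?(am_horner vB_am) /=.
  - exact: r1.
  - exact: r2.
  - by rewrite r3.
  - by rewrite r4.
have [[f [hf fu fv fz]] _] := univ _ _ _ _ rel'.
have [_ uniq] := univ _ _ _ _ (And4 r1 r2 r3 r4).
have e := uniq (vB \o f) id (am_comp hf vB_am) (@am_id _ _).
rewrite /= fu fv fz in e.
by rewrite -[a]/(id a) -(e erefl erefl erefl) /=; apply: vB_in.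
Qed.
End Gen.
Section Model.
Variables (C : numFieldType).
Local Notation V := {poly C}.

Definition lin (f : V -> V) := forall (c : C) (x y : V), f (c *: x + y) = c *: f x + f y.
Definition linb : {pred (V -> V)} := fun f => `[< lin f >].

Inductive E := mkE (f : V -> V) of f \in linb.
Definition vE (e : E) := let: mkE f _ := e in f.
HB.instance Definition _ := [isSub for vE].
HB.instance Definition _ := [Choice of E by <:].

Lemma linP (e : E) : lin (vE e).
Proof. by case: e => f hf; apply/asboolP. Qed.

Lemma lin0 (f : V -> V) : lin f -> f 0 = 0.
Proof.
move=> h; have := h 1 0 0; rewrite scaler0 addr0 scale1r => e.
by apply: (@addrI _ (f 0)); rewrite addr0 -e.
Qed.

Lemma linD f g : lin f -> lin g -> lin (fun x => f x + g x).
Proof. by move=> hf hg c x y; rewrite hf hg scalerDr addrACA. Qed.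
Lemma linN f : lin f -> lin (fun x => - f x).
Proof. by move=> hf c x y; rewrite hf opprD scalerN. Qed.
Lemma lin_0 : lin (fun _ => 0).
Proof. by move=> c x y; rewrite scaler0 addr0. Qed.
Lemma lin_id : lin id.
Proof. by []. Qed.
Lemma lin_comp f g : lin f -> lin g -> lin (f \o g).
Proof. by move=> hf hg c x y /=; rewrite hg hf. Qed.
Lemma linZ a f : lin f -> lin (fun x => a *: f x).
Proof. by move=> hf c x y; rewrite hf scalerDr !scalerA mulrC. Qed.

Definition mkL {f} (h : lin f) : E := @mkE f (introT (asboolP _) h).
Definition E0 := mkL lin_0.
Definition Eadd e1 e2 := mkL (linD (linP e1) (linP e2)).
Definition Eopp e := mkL (linN (linP e)).
Definition E1 := mkL lin_id.
Definition Emul e1 e2 := mkL (lin_comp (linP e1) (linP e2)).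
Definition Escale a e := mkL (linZ a (linP e)).

Lemma Eeq e1 e2 : vE e1 =1 vE e2 -> e1 = e2.
Proof. by move=> h; apply: val_inj; apply: funext. Qed.

Lemma EaddA : associative Eadd. Proof. by move=> ???; apply: Eeq => x /=; rewrite addrA. Qed.
Lemma EaddC : commutative Eadd. Proof. by move=> ??; apply: Eeq => x /=; rewrite addrC. Qed.
Lemma Eadd0 : left_id E0 Eadd. Proof. by move=> ?; apply: Eeq => x /=; rewrite add0r. Qed.
Lemma EaddN : left_inverse E0 Eopp Eadd. Proof. by move=> ?; apply: Eeq => x /=; rewrite addNr. Qed.
HB.instance Definition _ := GRing.isZmodule.Build E EaddA EaddC Eadd0 EaddN.

Lemma EmulA : associative Emul. Proof. by move=> ???; apply: Eeq. Qed.
Lemma Emul1 : left_id E1 Emul. Proof. by move=> ?; apply: Eeq. Qed.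
Lemma Emulr1 : right_id E1 Emul. Proof. by move=> ?; apply: Eeq. Qed.
Lemma EmulDl : left_distributive Emul +%R. Proof. by move=> ???; apply: Eeq. Qed.
Lemma EmulDr : right_distributive Emul +%R.
Proof. move=> e1 e2 e3; apply: Eeq => x /=. have h := linP e1 1 (vE e2 x) (vE e3 x). by rewrite !scale1r in h. Qed.
Lemma E1neq0 : E1 != 0.
Proof. apply/eqP => h; have := congr1 (fun e => vE e 1) h => /= /eqP; by rewrite oner_eq0. Qed.
HB.instance Definition _ := GRing.Zmodule_isNzRing.Build E EmulA Emul1 Emulr1 EmulDl EmulDr E1neq0.

Lemma EscaleA a b e : Escale a (Escale b e) = Escale (a * b) e.
Proof. by apply: Eeq => x /=; rewrite scalerA. Qed.
Lemma Escale1 : left_id 1 Escale. Proof. by move=> ?; apply: Eeq => x /=; rewrite scale1r. Qed.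
Lemma EscaleDr : right_distributive Escale +%R. Proof. by move=> ???; apply: Eeq => x /=; rewrite scalerDr. Qed.
Lemma EscaleDl e : {morph Escale^~ e : a b / a + b}. Proof. by move=> ??; apply: Eeq => x /=; rewrite scalerDl. Qed.
HB.instance Definition _ := GRing.Zmodule_isLmodule.Build C E EscaleA Escale1 EscaleDr EscaleDl.
Lemma EscaleAl (a : C) (e1 e2 : E) : a *: (e1 * e2) = (a *: e1) * e2.
Proof. by apply: Eeq. Qed.
HB.instance Definition _ := GRing.Lmodule_isLalgebra.Build C E EscaleAl.
Lemma EscaleAr (a : C) (e1 e2 : E) : a *: (e1 * e2) = e1 * (a *: e2).
Proof. apply: Eeq => x /=; have := linP e1 a (vE e2 x) 0; by rewrite !addr0 (lin0 (linP e1)) addr0. Qed.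
HB.instance Definition _ := GRing.Lalgebra_isAlgebra.Build C E EscaleAr.
Lemma vE_add (e1 e2 : E) x : vE (e1 + e2) x = vE e1 x + vE e2 x. Proof. by []. Qed.
Lemma vE_mul (e1 e2 : E) x : vE (e1 * e2) x = vE e1 (vE e2 x). Proof. by []. Qed.
Lemma vE_scale a (e : E) x : vE (a *: e) x = a *: vE e x. Proof. by []. Qed.
Lemma vE_1 x : vE (1 : E) x = x. Proof. by []. Qed.

Lemma vE_sub (e1 e2 : E) x : vE (e1 - e2) x = vE e1 x - vE e2 x. Proof. by []. Qed.

Lemma lin_mulop (q : V) : lin (fun f => q * f).
Proof. by move=> c x y; rewrite mulrDr scalerAr. Qed.
Lemma lin_compop (r : V) : lin (fun f => f \Po r).
Proof. by move=> c x y; rewrite comp_polyD comp_polyZ. Qed.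
Definition mulop q := mkL (lin_mulop q).
Definition compop r := mkL (lin_compop r).

Lemma horner_mulop q p : horner_alg (mulop q) p = mulop (p \Po q).
Proof.
elim/poly_ind: p => [|p c IH].
  by rewrite rmorph0 comp_poly0; apply: Eeq => x /=; rewrite mul0r.
rewrite rmorphD rmorphM /= horner_algX horner_algC IH.
apply: Eeq => x /=.
by rewrite comp_polyD comp_polyM comp_polyX comp_polyC mulrDl mul_polyC -mulrA.
Qed.

Lemma two_half : (2^-1 : C) + 2^-1 = 1.
Proof. have h : (2 : C) != 0 by rewrite pnatr_eq0. by field. Qed.

Variable P : {poly C}.
Definition PpE := P \Po ('X + (2^-1 : C)%:P).
Definition zE := mulop 'X.
Definition uE := compop ('X - 1).
Definition vE' := mulop PpE * compop ('X + 1).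

Lemma mulopXC c : mulop 'X + c%:A = mulop ('X + c%:P).
Proof. by apply: Eeq => x /=; rewrite mulrDl mul_polyC. Qed.

Lemma model_rels : AP_rels P uE vE' zE.
Proof.
split; apply: Eeq => x /=.
- by rewrite comp_polyM comp_polyX; ring.
- by rewrite comp_polyM comp_polyX; ring.
- rewrite -scaleNr mulopXC horner_mulop /= comp_polyM /PpE -!comp_polyA.
  rewrite !comp_polyD !comp_polyX !comp_polyC polyC1 subrK comp_polyXr.
  congr (_ * _); congr (_ \Po _); rewrite -addrA; congr (_ + _).
  apply/polyP => i; rewrite coefD coefN !coefC.
  case: i => [|i] /=; last by rewrite oppr0 add0r.
  have h : (2 : C) != 0 by rewrite pnatr_eq0.
  by field.
  rewrite mulopXC horner_mulop /= -comp_polyA comp_polyB comp_polyX comp_polyC.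
  by rewrite addrK comp_polyXr.
Qed.
End Model.

Lemma AP_ev_inj (C : numFieldType) (P : {poly C}) (A : algType C) (u v z : A) :
  is_AP P u v z -> forall S, horner_alg z S = 0 -> S = 0.
Proof.
move=> [_ univ] S h.
have [[f [hf _ _ fz]] _] := univ _ _ _ _ (model_rels P).
have := am_horner hf z S; rewrite h am0 // fz /zE horner_mulop comp_polyXr.
by move/(congr1 (fun e => vE e 1)) => /=; rewrite mulr1.
Qed.

Section Main.
Variables (C : numFieldType) (P : {poly C}) (A : algType C) (u v z : A) (T : A -> C).
Hypothesis rels : AP_rels P u v z.
Hypothesis Tlin : forall c a b, T (c *: a + b) = c * T a + T b.
Hypothesis Tcomm : forall a, T (a * z) = T (z * a).

Local Notation ev := (horner_alg z).

Lemma T0 : T 0 = 0.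
Proof. have := Tlin 1 0 0; rewrite scaler0 addr0 mul1r => h. by apply: (@addrI _ (T 0)); rewrite -h addr0. Qed.
Lemma TD a b : T (a + b) = T a + T b.
Proof. by have := Tlin 1 a b; rewrite scale1r mul1r. Qed.
Lemma TZ c a : T (c *: a) = c * T a.
Proof. by have := Tlin c a 0; rewrite addr0 T0 addr0. Qed.
Lemma TN a : T (- a) = - T a.
Proof. by rewrite -scaleN1r TZ mulN1r. Qed.
Lemma Tsum n (F : 'I_n -> A) : T (\sum_(i < n) F i) = \sum_(i < n) T (F i).
Proof. by apply: (big_rec2 (fun x y => T x = y)) => [|i x y _ <-]; rewrite ?T0 ?TD. Qed.

Definition wt (x : A) (w : C) := z * x - x * z = w *: x.

Lemma T_wt x w : wt x w -> w != 0 -> T x = 0.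
Proof.
move=> hw hw0; have : T (z * x - x * z) = 0 by rewrite TD TN Tcomm subrr.
by rewrite hw TZ => /eqP; rewrite mulf_eq0 (negbTE hw0) => /eqP.
Qed.

Lemma wtM x y a b : wt x a -> wt y b -> wt (x * y) (a + b).
Proof.
rewrite /wt => hx hy.
have -> : z * (x * y) - x * y * z = (z * x - x * z) * y + x * (z * y - y * z).
  by rewrite mulrBl mulrBr !mulrA addrA subrK.
by rewrite hx hy -scalerAl -scalerAr scalerDl.
Qed.

Lemma wt_ev p : wt (ev p) 0.
Proof.
rewrite /wt scale0r; apply/eqP; rewrite subr_eq0; apply/eqP.
have := rmorphM (horner_alg z) 'X p; rewrite mulrC rmorphM /= horner_algX.
by move=> ->.
Qed.

Lemma wt_u : wt u 1.
Proof. by rewrite /wt scale1r; case: rels. Qed.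
Lemma wt_v : wt v (-1).
Proof. by rewrite /wt scaleN1r; case: rels. Qed.

Lemma wt_uk k : wt (u ^+ k) k%:R.
Proof.
elim: k => [|k IH]; first by rewrite expr0 /wt mul1r mulr1 subrr scale0r.
by rewrite exprSr -natr1; apply: wtM IH wt_u.
Qed.
Lemma wt_vk k : wt (v ^+ k) (- k%:R).
Proof.
elim: k => [|k IH]; first by rewrite expr0 /wt mul1r mulr1 subrr oppr0 scale0r.
by rewrite exprSr -natr1 opprD; apply: wtM IH wt_v.
Qed.

Lemma wt_uev k p : wt (u ^+ k * ev p) k%:R.
Proof. by rewrite -[k%:R]addr0; apply: wtM; [apply: wt_uk | apply: wt_ev]. Qed.
Lemma wt_vev k p : wt (v ^+ k * ev p) (- k%:R).
Proof. by rewrite -[- k%:R]addr0; apply: wtM; [apply: wt_vk | apply: wt_ev]. Qed.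


Definition sh (c : C) (p : {poly C}) := p \Po ('X + c%:P).

Lemma shA a b p : sh a (sh b p) = sh (b + a) p.
Proof.
rewrite /sh -comp_polyA comp_polyD comp_polyX comp_polyC polyCD.
by rewrite -addrA (addrC a%:P).
Qed.
Lemma sh0 p : sh 0 p = p.
Proof. by rewrite /sh addr0 comp_polyXr. Qed.
Lemma sh_neq0 c p : p != 0 -> sh c p != 0.
Proof. by rewrite -!size_poly_eq0 /sh size_comp_poly2 // size_XaddC. Qed.
Lemma shM c p q : sh c (p * q) = sh c p * sh c q.
Proof. by rewrite /sh comp_polyM. Qed.

Lemma ev_hor q p : horner_alg (ev q) p = ev (p \Po q).
Proof.
elim/poly_ind: p => [|p c IH]; first by rewrite comp_poly0 !rmorph0.
rewrite rmorphD rmorphM /= horner_algX horner_algC IH.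
by rewrite comp_polyD comp_polyM comp_polyX comp_polyC rmorphD rmorphM /= horner_algC.
Qed.

Lemma ev_XC c : ev ('X + c%:P) = z + c%:A.
Proof. by rewrite rmorphD /= horner_algX horner_algC. Qed.

Lemma ev_sh c p : ev (sh c p) = horner_alg (z + c%:A) p.
Proof. by rewrite -ev_XC ev_hor. Qed.

Lemma zu : z * u = u * (z + 1%:A).
Proof. case: rels => r1 _ _ _; rewrite scale1r mulrDr mulr1.
by apply/eqP; rewrite -subr_eq0 opprD addrA r1 subrr. Qed.
Lemma zv : z * v = v * (z + (-1)%:A).
Proof.
case: rels => _ r2 _ _; rewrite scaleN1r mulrDr mulrN1.
by apply/eqP; rewrite -subr_eq0 opprD opprK addrA r2 addNr.
Qed.

Lemma ev_u p : ev p * u = u * ev (sh 1 p).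
Proof.
elim/poly_ind: p => [|p c IH]; first by rewrite /sh comp_poly0 !rmorph0 mul0r mulr0.
rewrite /sh comp_polyD comp_polyM comp_polyX comp_polyC -/(sh 1 p).
rewrite !rmorphD !rmorphM /= !horner_algX !horner_algC.
rewrite mulrDl -mulrA zu mulrA IH.
by rewrite ev_XC mulr_algl [RHS]mulrDr mulr_algr mulrA.
Qed.

Lemma ev_v p : ev p * v = v * ev (sh (-1) p).
Proof.
elim/poly_ind: p => [|p c IH]; first by rewrite /sh comp_poly0 !rmorph0 mul0r mulr0.
rewrite /sh comp_polyD comp_polyM comp_polyX comp_polyC -/(sh (-1) p).
rewrite !rmorphD !rmorphM /= !horner_algX !horner_algC.
rewrite mulrDl -mulrA zv mulrA IH.
by rewrite ev_XC mulr_algl [RHS]mulrDr mulr_algr mulrA.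
Qed.

Lemma ev_uk k p : ev p * u ^+ k = u ^+ k * ev (sh k%:R p).
Proof.
elim: k p => [|k IH] p; first by rewrite !expr0 mulr1 mul1r sh0.
by rewrite exprSr mulrA IH -!mulrA ev_u shA natr1.
Qed.

Lemma ev_vk k p : ev p * v ^+ k = v ^+ k * ev (sh (- k%:R) p).
Proof.
elim: k p => [|k IH] p; first by rewrite !expr0 mulr1 mul1r oppr0 sh0.
by rewrite exprSr mulrA IH -!mulrA ev_v shA -opprD natr1.
Qed.

Definition Pm := sh (- 2^-1) P.
Definition Pp := sh (2^-1) P.

Lemma uv_ev : u * v = ev Pm.
Proof. by case: rels => _ _ r3 _; rewrite r3 /Pm ev_sh scaleNr. Qed.
Lemma vu_ev : v * u = ev Pp.
Proof. by case: rels => _ _ _ r4; rewrite r4 /Pp ev_sh. Qed.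


Lemma evZ c p : c *: ev p = ev (c *: p).
Proof. by rewrite -mul_polyC rmorphM /= horner_algC mulr_algl. Qed.

Inductive Wsp : A -> Prop :=
 | Wsp0 : Wsp 0
 | WspU k p : Wsp (u ^+ k * ev p)
 | WspV k p : Wsp (v ^+ k * ev p)
 | WspD a b : Wsp a -> Wsp b -> Wsp (a + b).

Lemma WspZ c a : Wsp a -> Wsp (c *: a).
Proof.
elim=> [|k p|k p|a1 a2 _ h1 _ h2].
- by rewrite scaler0; apply: Wsp0.
- by rewrite scalerAr evZ; apply: WspU.
- by rewrite scalerAr evZ; apply: WspV.
- by rewrite scalerDr; apply: WspD.
Qed.

Lemma Wsp_z a : Wsp a -> Wsp (z * a).
Proof.
have eX : z = ev 'X by rewrite horner_algX.
elim=> [|k p|k p|a1 a2 _ h1 _ h2].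
- by rewrite mulr0; apply: Wsp0.
- by rewrite mulrA {1}eX ev_uk -mulrA -rmorphM; apply: WspU.
- by rewrite mulrA {1}eX ev_vk -mulrA -rmorphM; apply: WspV.
- by rewrite mulrDr; apply: WspD.
Qed.

Lemma Wsp_u a : Wsp a -> Wsp (u * a).
Proof.
elim=> [|k p|k p|a1 a2 _ h1 _ h2].
- by rewrite mulr0; apply: Wsp0.
- by rewrite mulrA -exprS; apply: WspU.
- case: k => [|k]; first by rewrite expr0 mul1r -[u]expr1; apply: WspU.
  by rewrite exprS !mulrA uv_ev ev_vk -mulrA -rmorphM; apply: WspV.
- by rewrite mulrDr; apply: WspD.
Qed.

Lemma Wsp_v a : Wsp a -> Wsp (v * a).
Proof.
elim=> [|k p|k p|a1 a2 _ h1 _ h2].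
- by rewrite mulr0; apply: Wsp0.
- case: k => [|k]; first by rewrite expr0 mul1r -[v]expr1; apply: WspV.
  by rewrite exprS !mulrA vu_ev ev_uk -mulrA -rmorphM; apply: WspU.
- by rewrite mulrA -exprS; apply: WspV.
- by rewrite mulrDr; apply: WspD.
Qed.

Hypothesis gen : forall L : A -> Prop, L 1 -> (forall a b, L a -> L b -> L (a + b)) ->
  L 0 -> (forall c a, L a -> L (c *: a)) -> (forall a b, L a -> L b -> L (a * b)) ->
  L u -> L v -> L z -> forall a, L a.

Lemma Wsp_all a : Wsp a.
Proof.
have h1 : Wsp 1 by rewrite -[1](mulr1) -[X in X * _](expr0 u) -(rmorph1 (horner_alg z)); apply: WspU.
suff key : forall a b, Wsp b -> Wsp (a * b) by rewrite -[a]mulr1; apply: key.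
apply: (gen (L := fun a => forall b, Wsp b -> Wsp (a * b))).
- by move=> b hb; rewrite mul1r.
- by move=> a1 a2 ha1 ha2 b hb; rewrite mulrDl; apply: WspD; [apply: ha1 | apply: ha2].
- by move=> b hb; rewrite mul0r; apply: Wsp0.
- by move=> c a1 ha b hb; rewrite -scalerAl; apply: WspZ; apply: ha.
- by move=> a1 a2 ha1 ha2 b hb; rewrite -mulrA; apply: ha1; apply: ha2.
- exact: Wsp_u.
- exact: Wsp_v.
- exact: Wsp_z.
Qed.

Local Notation F := (stieltjes z T).

Lemma ev_sum p : ev p = \sum_(i < size p) p`_i *: z ^+ i.
Proof.
rewrite -{1}[p]coefK poly_def rmorph_sum; apply: eq_bigr => i _.
transitivity (ev (p`_i *: 'X^i)); first by [].
by rewrite -evZ rmorphXn /= horner_algX.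
Qed.

Lemma lmul_neg S n : lmul_poly S F (Negz n) = T (ev S * z ^+ n).
Proof.
rewrite ev_sum mulr_suml Tsum /lmul_poly; apply: eq_bigr => i _.
rewrite -scalerAl -exprD TZ (_ : Negz n - (i : nat)%:Z = Negz (n + i)) /=.
  by rewrite addnC.
by rewrite !NegzE; lia.
Qed.

Lemma T_evS_ev S : (forall n, T (ev S * z ^+ n) = 0) -> forall p, T (ev S * ev p) = 0.
Proof.
move=> h p; rewrite (ev_sum p) mulr_sumr Tsum big1 // => i _.
by rewrite -scalerAr TZ h mulr0.
Qed.

Lemma part1 S : in_IT z T S <-> laurent_is_poly (lmul_poly S F).
Proof.
split=> [h n|h]; first by rewrite lmul_neg; apply: h.
have h' : forall n, T (ev S * z ^+ n) = 0 by move=> n; rewrite -lmul_neg; apply: h.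
move=> b; elim: (Wsp_all b) => [|k p|k p|a1 a2 _ h1 _ h2].
- by rewrite mulr0 T0.
- case: k => [|k]; first by rewrite expr0 mul1r; apply: T_evS_ev.
  apply: (@T_wt _ (0 + k.+1%:R)); first by apply: wtM; [apply: wt_ev | apply: wt_uev].
  by rewrite add0r pnatr_eq0.
- case: k => [|k]; first by rewrite expr0 mul1r; apply: T_evS_ev.
  apply: (@T_wt _ (0 + - k.+1%:R)); first by apply: wtM; [apply: wt_ev | apply: wt_vev].
  by rewrite add0r oppr_eq0 pnatr_eq0.
- by rewrite mulrDr TD h1 h2 addr0.
Qed.

Lemma lip_rat S : laurent_is_poly (lmul_poly S F) ->
  lmul_poly S F = laurent_of_poly (\poly_(i < size S) lmul_poly S F (Posz i)).
Proof.
move=> h; apply: funext => -[n|n] /=; last by apply: h.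
rewrite coef_poly; case: ltnP => hn //.
rewrite /lmul_poly big1 // => i _.
have hi : (i <= n)%N by apply: ltnW; apply: leq_trans (ltn_ord i) hn.
by rewrite subzn //= mulr0.
Qed.


Definition Gsum n (f h : nat -> {poly C}) :=
  \sum_(k < n) (u ^+ k * ev (f k) + v ^+ k.+1 * ev (h k)).

Lemma Gsum_widen n N f h : (n <= N)%N ->
  (forall k, (n <= k)%N -> f k = 0 /\ h k = 0) -> Gsum N f h = Gsum n f h.
Proof.
move=> hN hs; rewrite /Gsum.
rewrite [RHS](big_ord_widen _ (fun k => u ^+ k * ev (f k) + v ^+ k.+1 * ev (h k)) hN).
rewrite [RHS]big_mkcond; apply: eq_bigr => i _; case: ifP => // /negbT; rewrite -leqNgt => hi.
by have [-> ->] := hs _ hi; rewrite !rmorph0 !mulr0 addr0.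
Qed.

Lemma Gsum_add n f1 h1 f2 h2 :
  Gsum n (fun k => f1 k + f2 k) (fun k => h1 k + h2 k) = Gsum n f1 h1 + Gsum n f2 h2.
Proof.
rewrite /Gsum -big_split; apply: eq_bigr => i _.
by rewrite !rmorphD !mulrDr addrACA.
Qed.

Lemma Gsum_single k p q :
  Gsum k.+1 (fun j => if j == k then p else 0) (fun j => if j == k then q else 0) =
  u ^+ k * ev p + v ^+ k.+1 * ev q.
Proof.
rewrite /Gsum big_ord_recr /= eqxx big1 ?add0r // => i _.
by rewrite ltn_eqF // !rmorph0 !mulr0 addr0.
Qed.

Definition Gform a := exists n f h,
  (forall k, (n <= k)%N -> f k = 0 /\ h k = 0) /\ a = Gsum n f h.

Lemma single_supp k (p q : {poly C}) j : (k.+1 <= j)%N ->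
  (if j == k then p else 0) = 0 /\ (if j == k then q else 0) = 0.
Proof. by move=> hj; rewrite gtn_eqF. Qed.

Lemma Wsp_Gform a : Wsp a -> Gform a.
Proof.
elim=> [|k p|k p|a1 a2 _ [n1 [f1 [h1 [s1 e1]]]] _ [n2 [f2 [h2 [s2 e2]]]]].
- exists 0%N, (fun _ => 0), (fun _ => 0); split => // ; by rewrite /Gsum big_ord0.
- exists k.+1, (fun j => if j == k then p else 0), (fun j => if j == k then 0 else 0).
  split; first by move=> j; apply: single_supp.
  by rewrite Gsum_single rmorph0 mulr0 addr0.
- case: k => [|k].
    exists 1%N, (fun j => if j == 0%N then p else 0), (fun j => if j == 0%N then 0 else 0).
    split; first by move=> j; apply: single_supp.
    by rewrite Gsum_single rmorph0 mulr0 addr0 !expr0.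
  exists k.+1, (fun j => if j == k then 0 else 0), (fun j => if j == k then p else 0).
  split; first by move=> j; apply: single_supp.
  by rewrite Gsum_single rmorph0 mulr0 add0r.
- exists (n1 + n2)%N, (fun k => f1 k + f2 k), (fun k => h1 k + h2 k); split.
    move=> k hk; have [-> ->] := s1 k (leq_trans (leq_addr _ _) hk).
    by have [-> ->] := s2 k (leq_trans (leq_addl _ _) hk); rewrite !addr0.
  by rewrite Gsum_add e1 e2 (Gsum_widen (leq_addr _ _) s1) (Gsum_widen (leq_addl _ _) s2).
Qed.

Fixpoint Qu k := if k is k'.+1 then Qu k' * sh (- k'%:R) Pm else 1.
Fixpoint Qv k := if k is k'.+1 then Qv k' * sh k'%:R Pp else 1.

Lemma Qu_ev k : u ^+ k * v ^+ k = ev (Qu k).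
Proof.
elim: k => [|k IH] /=; first by rewrite !expr0 mulr1 rmorph1.
rewrite exprSr exprS -mulrA (mulrA u) uv_ev ev_vk mulrA IH.
by rewrite -rmorphM.
Qed.

Lemma Qv_ev k : v ^+ k * u ^+ k = ev (Qv k).
Proof.
elim: k => [|k IH] /=; first by rewrite !expr0 mulr1 rmorph1.
rewrite exprSr exprS -mulrA (mulrA v) vu_ev ev_uk mulrA IH.
by rewrite -rmorphM.
Qed.

Hypothesis Pnz : P != 0.

Lemma Qu_neq0 k : Qu k != 0.
Proof. elim: k => [|k IH] /=; first by rewrite oner_neq0. by rewrite mulf_neq0 // !sh_neq0. Qed.
Lemma Qv_neq0 k : Qv k != 0.
Proof. elim: k => [|k IH] /=; first by rewrite oner_neq0. by rewrite mulf_neq0 // !sh_neq0. Qed.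


Section Isolate.
Variables (a : A) (n : nat) (f h : nat -> {poly C}).
Hypothesis ea : a = Gsum n f h.
Hypothesis ha : forall b, T (a * b) = 0.

Lemma Ta_split y : T (a * y) =
  \sum_(j < n) T (u ^+ j * ev (f j) * y) + \sum_(j < n) T (v ^+ j.+1 * ev (h j) * y).
Proof.
rewrite ea /Gsum mulr_suml Tsum -big_split; apply: eq_bigr => j _.
by rewrite mulrDl TD.
Qed.

Lemma natN0 (j k : nat) : j != k -> (j%:R - k%:R : C) != 0.
Proof. by rewrite subr_eq0 eqr_nat. Qed.
Lemma natS0 (j k : nat) : (- j.+1%:R - k%:R : C) != 0.
Proof. by rewrite -opprD oppr_eq0 -natrD pnatr_eq0 addSn. Qed.
Lemma natS0' (j k : nat) : (j%:R + k.+1%:R : C) != 0.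
Proof. by rewrite -natrD pnatr_eq0 addnS. Qed.

Lemma iso_u k : (k < n)%N -> forall b, T (u ^+ k * ev (f k) * b) = 0.
Proof.
move=> hk b; elim: (Wsp_all b) => [|m p|m p|a1 a2 _ h1 _ h2].
- by rewrite mulr0 T0.
- have hw := wtM (wt_uev k (f k)) (wt_uev m p).
  have [e|ne] := eqVneq (k%:R + m%:R : C) 0; last by apply: T_wt hw ne.
  have [km0 mm0] : k = 0%N /\ m = 0%N.
    by move: e => /eqP; rewrite -natrD pnatr_eq0 addn_eq0 => /andP[/eqP -> /eqP ->].
  subst k m; have := ha (u ^+ 0 * ev p); rewrite Ta_split (bigD1 (Ordinal hk)) //=.
  rewrite big1 => [|j /= hj]; last first.
    apply: (T_wt (wtM (wt_uev _ _) (wt_uev _ _))); rewrite addr0 pnatr_eq0.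
    by apply: contra hj => /eqP hj0; apply/eqP; apply: val_inj.
  rewrite addr0 big1 ?addr0 // => j _.
  apply: (T_wt (wtM (wt_vev _ _) (wt_uev _ _))).
  by rewrite addr0 oppr_eq0 pnatr_eq0.
- have hw := wtM (wt_uev k (f k)) (wt_vev m p).
  have [e|ne] := eqVneq (k%:R + - m%:R : C) 0; last by apply: T_wt hw ne.
  have km : k = m by move: e => /eqP; rewrite subr_eq0 eqr_nat => /eqP.
  subst m; have := ha (v ^+ k * ev p); rewrite Ta_split (bigD1 (Ordinal hk)) //=.
  rewrite big1 => [|j /= hj]; last first.
    apply: (T_wt (wtM (wt_uev _ _) (wt_vev _ _))); apply: natN0.
    by apply: contra hj => /eqP hj0; apply/eqP; apply: val_inj.
  rewrite addr0 big1 ?addr0 // => j _.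
  apply: (T_wt (wtM (wt_vev _ _) (wt_vev _ _))); exact: natS0.
- by rewrite mulrDr TD h1 h2 addr0.
Qed.

Lemma iso_v k : (k < n)%N -> forall b, T (v ^+ k.+1 * ev (h k) * b) = 0.
Proof.
move=> hk b; elim: (Wsp_all b) => [|m p|m p|a1 a2 _ h1 _ h2].
- by rewrite mulr0 T0.
- have hw := wtM (wt_vev k.+1 (h k)) (wt_uev m p).
  have [e|ne] := eqVneq (- k.+1%:R + m%:R : C) 0; last by apply: T_wt hw ne.
  have km : m = k.+1 by move: e => /eqP; rewrite addrC subr_eq0 eqr_nat => /eqP.
  subst m.
  have z1 : \sum_(j < n) T (u ^+ j * ev (f j) * (u ^+ k.+1 * ev p)) = 0.
    by apply: big1 => j _; apply: (T_wt (wtM (wt_uev _ _) (wt_uev _ _))); exact: natS0'.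
  have := ha (u ^+ k.+1 * ev p); rewrite Ta_split z1 add0r (bigD1 (Ordinal hk)) //=.
  rewrite big1 ?addr0 // => j /= hj.
  apply: (T_wt (wtM (wt_vev _ _) (wt_uev _ _))).
  rewrite addrC -[_ - _]opprK opprB oppr_eq0 -[X in _ - X]opprK opprK.
  apply: natN0; rewrite eqSS; apply: contra hj => /eqP hj0; apply/eqP; exact: val_inj.
- have hw := wtM (wt_vev k.+1 (h k)) (wt_vev m p).
  by apply: T_wt hw _; rewrite -opprD oppr_eq0 -natrD pnatr_eq0 addSn.
- by rewrite mulrDr TD h1 h2 addr0.
Qed.

End Isolate.

Lemma in_IT_ev S : in_IT z T S -> forall p, in_IT z T (S * p).
Proof. by move=> hS p b; rewrite rmorphM /= -mulrA; apply: hS. Qed.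
Lemma in_IT_sub S1 S2 : in_IT z T S1 -> in_IT z T S2 -> in_IT z T (S1 - S2).
Proof. by move=> h1 h2 b; rewrite rmorphB /= mulrBl TD TN h1 h2 subrr. Qed.

Lemma evQv_mul k p : ev (Qv k * p) = v ^+ k * u ^+ k * ev p.
Proof. by rewrite Qv_ev rmorphM. Qed.

Lemma deg_rat : degenerate T -> is_rational_expansion F.
Proof.
case=> a [a0 ha]; have [n [f [h [hs ea]]]] := Wsp_Gform (Wsp_all a).
suff [S [S0 hS]] : exists S, S != 0 /\ in_IT z T S.
  exists (\poly_(i < size S) lmul_poly S F (Posz i)), S; split => //.
  by apply: lip_rat; apply/part1.
case: (pickP (fun k : 'I_n => (f k != 0) || (h k != 0))) => [k /orP [fk|hk] | none].
- exists (Qu k * sh (- k%:R) (f k)); split; first by rewrite mulf_neq0 ?Qu_neq0 ?sh_neq0.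
  move=> b; rewrite rmorphM /= -Qu_ev -(mulrA (u ^+ k)) -ev_vk -!mulrA mulrA.
  exact: (iso_u ea ha (ltn_ord k)).
- exists (Qv k.+1 * sh (k.+1%:R) (h k)); split; first by rewrite mulf_neq0 ?Qv_neq0 ?sh_neq0.
  move=> b; rewrite evQv_mul -(mulrA (v ^+ k.+1)) -ev_uk -!mulrA mulrA.
  exact: (iso_v ea ha (ltn_ord k)).
- exfalso; move/eqP: a0; apply; rewrite ea /Gsum big1 // => i _.
  by have := none i => /norP [/negPn/eqP -> /negPn/eqP ->]; rewrite !rmorph0 !mulr0 addr0.
Qed.

Hypothesis ev_inj : forall S, ev S = 0 -> S = 0.

Lemma rat_deg : is_rational_expansion F -> degenerate T.
Proof.
case=> Rp [S [S0 hS]]; exists (ev S); split.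
  by apply: contra S0 => /eqP /ev_inj ->.
by apply/part1; rewrite hS.
Qed.

Lemma part3 Rp S : S \is monic -> coprimep Rp S ->
  lmul_poly S F = laurent_of_poly Rp ->
  forall Q, in_IT z T Q <-> (S %| Q)%R.
Proof.
move=> mS cop hS Q; have S0 := monic_neq0 mS.
have iS : in_IT z T S by apply/part1; rewrite hS.
split=> [hQ|dQ]; last first.
  by rewrite -(divpK dQ) mulrC; apply: in_IT_ev.
have ir : in_IT z T (Q %% S).
  have -> : Q %% S = Q - S * (Q %/ S) by rewrite {2}(divp_eq Q S) mulrC addrC addKr.
  by apply: in_IT_sub => //; apply: in_IT_ev.
have er := lip_rat (proj1 (part1 _) ir).
set r := Q %% S in ir er; set Rr := \poly_(i < size r) _ in er.
have e : r * Rp = S * Rr.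
  apply: lop_inj. rewrite -!lmul_lop. rewrite -hS -er. apply: (@funext int C) => k.
  have h1 := lmul_mul r S F k.
  by rewrite -h1 (mulrC r S) lmul_mul.
have dr : (S %| r)%R.
  rewrite -(Gauss_dvdpl _ (q := Rp)); last by rewrite coprimep_sym.
  by rewrite e dvdp_mulIl.
apply/modp_eq0P; apply/eqP; apply: contraT => r0.
have := dvdp_leq r0 dr; rewrite leqNgt ltn_modp S0.
by [].
Qed.

Lemma main_sec :
  (forall S : {poly C},
      in_IT z T S <-> laurent_is_poly (lmul_poly S (stieltjes z T))) /\
  (degenerate T <-> is_rational_expansion (stieltjes z T)) /\
  (forall Rp S : {poly C}, S \is monic -> coprimep Rp S ->
      lmul_poly S (stieltjes z T) = laurent_of_poly Rp ->
      forall Q : {poly C}, in_IT z T Q <-> (S %| Q)%R).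
Proof.
split; first exact: part1.
split; first by split; [apply: deg_rat | apply: rat_deg].
exact: part3.
Qed.

End Main.

End Aux.
Import Aux.

Theorem theorem3p2 (R : realType) (P : {poly R[i]}) (t : R[i])
  (A : algType R[i]) (u v z : A) (g : A -> A) (T : A -> R[i]) :
  P \is monic -> (1 < size P)%N -> t != 0 ->
  is_AP P u v z ->
  alg_morph g -> g u = t^-1 *: u -> g v = t *: v -> g z = z ->
  twisted_trace g T ->
  (forall S : {poly R[i]},
      in_IT z T S <-> laurent_is_poly (lmul_poly S (stieltjes z T))) /\
  (degenerate T <-> is_rational_expansion (stieltjes z T)) /\
  (forall Rp S : {poly R[i]}, S \is monic -> coprimep Rp S ->
      lmul_poly S (stieltjes z T) = laurent_of_poly Rp ->
      forall Q : {poly R[i]}, in_IT z T Q <-> (S %| Q)%R).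
Proof.
move=> hmon hsz ht hAP hg gu gv gz [Tlin Ttw].
have Tcomm : forall a, T (a * z) = T (z * a) by move=> a; rewrite Ttw gz.
apply: (main_sec (proj1 hAP) Tlin Tcomm _ (monic_neq0 hmon) (AP_ev_inj hAP)).
move=> L h1 h2 h3 h4 h5; exact: (AP_gen h1 h2 h3 h4 h5 hAP).
Qed.
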